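(* Let $\epsilon<1/2$, $S\subseteq\{0,1\}^n$ and $f:S\to\{0,1\}$. If $f$ is $\epsilon$-approximated by functions $\{f_j\}_{j\in J}$ with $\mathsf{sumPI}(f_j)\le s$ for every $j\in J$, then $\mathsf{sumPI}(f)\le s/(1-2\epsilon)$.
   Context: $f$ is $\epsilon$-approximated by $\{f_j\}_{j\in J}$, $f_j:S\to\{0,1\}$, if there is a probability distribution $\alpha$ on $J$ such that for every $x\in S$, $\Pr_{j\sim\alpha}[f(x)=f_j(x)]\ge1-\epsilon$. For $g:S\to\{0,1\}$, with $p=\{p_x:x\in S\}$ ranging over families of probability distributions on $[n]$, $$\mathsf{sumPI}(g)=\min_{p}\ \max_{x,y\in S:\ g(x)\neq g(y)} \frac{1}{\sum_{i:\,x_i\neq y_i}\sqrt{p_x(i)p_y(i)}}.$$ *)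

(* Defs.v *)
From HB Require Import structures.
From mathcomp Require Import all_boot all_order all_algebra.
From mathcomp Require Import all_classical all_reals ereal.
Set Implicit Arguments. Unset Strict Implicit. Unset Printing Implicit Defensive.
Import Order.TTheory GRing.Theory Num.Theory.
Local Open Scope ring_scope.
Local Open Scope classical_set_scope.

Notation cube n := {ffun 'I_n -> bool}.

Definition is_distr (R : realType) (J : finType) (alpha : J -> R) : Prop :=
  (forall j, 0 <= alpha j) /\ \sum_(j : J) alpha j = 1.

Definition eps_approx (R : realType) (n : nat) (J : finType)
    (S : {set cube n}) (eps : R)
    (f : cube n -> bool) (fs : J -> cube n -> bool) : Prop :=
  exists alpha : J -> R, is_distr alpha /\
    forall x, x \in S -> \sum_(j | f x == fs j x) alpha j >= 1 - eps.

Definition prob_family (R : realType) (n : nat) (S : {set cube n})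
    (p : cube n -> 'I_n -> R) : Prop :=
  forall x, x \in S -> is_distr (p x).

Definition pair_cost (R : realType) (n : nat) (p : cube n -> 'I_n -> R)
    (x y : cube n) : \bar R :=
  let t := \sum_(i | x i != y i) Num.sqrt (p x i * p y i) in
  if t == 0 then +oo%E else (t^-1)%:E.

Definition sumPI_obj (R : realType) (n : nat) (S : {set cube n})
    (g : cube n -> bool) (p : cube n -> 'I_n -> R) : \bar R :=
  ereal_sup [set z | exists x y, [/\ x \in S, y \in S, g x != g y &
                                       z = pair_cost p x y]].

(* sumPI(g) = min over admissible p of the objective (taken as an inf;
   the min is attained by compactness). *)
Definition sumPI {R : realType} (n : nat) (S : {set cube n})
    (g : cube n -> bool) : \bar R :=
  ereal_inf [set z | exists p, prob_family S p /\ z = sumPI_obj S g p].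

(* Main.v *)
Require Import Defs.
From HB Require Import structures.
From mathcomp Require Import all_boot all_order all_algebra.
From mathcomp Require Import all_classical all_reals ereal.
From mathcomp Require Import ring lra.
Import Order.TTheory GRing.Theory Num.Theory.
Local Open Scope ring_scope.
Lemma sqrt_conc (R : realType) (J : finType) (a u v : J -> R) :
  (forall j, 0 <= a j) -> (forall j, 0 <= u j) -> (forall j, 0 <= v j) ->
  \sum_j a j * Num.sqrt (u j * v j) <=
  Num.sqrt ((\sum_j a j * u j) * (\sum_j a j * v j)).
Proof.
move=> a0 u0 v0.
set w := \sum_j _; set P := \sum_j _ * u j; set Q := \sum_j _ * v j.
have w0 : 0 <= w by apply: sumr_ge0 => j _; apply: mulr_ge0 => //; exact: sqrtr_ge0.
have P0 : 0 <= P by apply: sumr_ge0 => j _; exact: mulr_ge0.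
have Q0 : 0 <= Q by apply: sumr_ge0 => j _; exact: mulr_ge0.
have key : forall l, 0 < l -> 2 * l * w <= l ^+ 2 * P + Q.
  move=> l l0.
  have -> : 2 * l * w = \sum_j a j * (2 * l * Num.sqrt (u j * v j)).
    rewrite /w mulr_sumr; apply: eq_bigr => j _; ring.
  have -> : l ^+ 2 * P + Q = \sum_j a j * (l ^+ 2 * u j + v j).
    rewrite /P /Q !mulr_sumr -big_split; apply: eq_bigr => j _ /=; ring.
  apply: ler_sum => j _; apply: ler_wpM2l => //.
  rewrite sqrtrM //.
  have hu := sqr_sqrtr (u0 j); have hv := sqr_sqrtr (v0 j).
  set su := Num.sqrt (u j) in hu *; set sv := Num.sqrt (v j) in hv *.
  rewrite -hu -hv; have := sqr_ge0 (l * su - sv); rewrite !expr2; nra.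
have w2 : w ^+ 2 <= P * Q.
  have [P00|Pp] := eqVneq P 0.
    have [->|wp] := eqVneq w 0; first by rewrite expr0n /= mulr_ge0.
    have wpos : 0 < w by rewrite lt_def wp w0.
    have := key ((Q + 1) / w) (divr_gt0 (ltr_wpDl Q0 ltr01) wpos).
    rewrite P00 mulr0 add0r -mulrA divfK //; lra.
  have Ppos : 0 < P by rewrite lt_def Pp P0.
  have [->|wp] := eqVneq w 0; first by rewrite expr0n /= mulr_ge0.
  have wpos : 0 < w by rewrite lt_def wp w0.
  have := key (w / P) (divr_gt0 wpos Ppos).
  set z := w / P.
  have wz : w = z * P by rewrite /z -mulrA mulVf // mulr1.
  rewrite wz => H.
  have H2 : z ^+ 2 * P <= Q by move: H; rewrite !expr2; lra.
  have := ler_wpM2r P0 H2; rewrite !expr2 => H3.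
  by apply: le_trans _ (_ : Q * P <= _); [rewrite -!mulrA (mulrC P) in H3 *; rewrite !mulrA in H3 *; nra | rewrite mulrC].
by rewrite -(ger0_norm w0) -sqrtr_sqr ler_sqrt // mulr_ge0.
Qed.

Lemma mass (R : realType) (J : finType) (a : J -> R) (A B : pred J) :
  (forall j, 0 <= a j) -> \sum_j a j = 1 ->
  \sum_(j | A j) a j + \sum_(j | B j) a j - 1 <= \sum_(j | A j && B j) a j.
Proof.
move=> a0 a1.
rewrite -a1 !(big_mkcond A) !(big_mkcond B) (big_mkcond (fun j => A j && B j)).
rewrite -big_split /= lerBlDr -big_split /=.
apply: ler_sum => j _; have := a0 j.
by case: (A j); case: (B j) => /=; lra.
Qed.

Theorem mainTheorem8 (R : realType) (n : nat) (J : finType) (eps s : R)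
    (S : {set cube n}) (f : cube n -> bool) (fs : J -> cube n -> bool) :
  eps < 1 / 2 ->
  eps_approx S eps f fs ->
  (forall j : J, (sumPI (R := R) S (fs j) <= s%:E)%E) ->
  (sumPI (R := R) S f <= (s / (1 - 2 * eps))%:E)%E.
Proof.
move=> heps [a [[a0 a1] happ]] hs.
set c := 1 - 2 * eps.
have c0 : 0 < c by rewrite /c; lra.
apply/lee_addgt0Pr => e e0.
set s' := s + e * c.
have es : s / c + e = s' / c by rewrite /s'; field; rewrite gt_eqF.
have hch : forall j, exists p, prob_family S p /\ forall x y, x \in S -> y \in S ->
    fs j x != fs j y ->
    1 <= s' * \sum_(i | x i != y i) Num.sqrt (p x i * p y i).
  move=> j.
  have : (sumPI (R := R) S (fs j) < s'%:E)%E.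
    apply: le_lt_trans (hs j) _; rewrite lte_fin /s'.
    have := mulr_gt0 e0 c0; lra.
  case/ereal_inf_lt => z [p [pf ->]] hlt.
  exists p; split => // x y xS yS hxy.
  have : (pair_cost p x y < s'%:E)%E.
    apply: le_lt_trans hlt; apply: ereal_sup_ubound; exists x, y; split => //.
  rewrite /pair_cost /=.
  set t := \sum_(i | _) _.
  have t0 : 0 <= t by apply: sumr_ge0 => i _; exact: sqrtr_ge0.
  case: eqP => [_|/eqP tn0]; first by rewrite ltNge leey.
  rewrite lte_fin => H.
  have tp : 0 < t by rewrite lt_def tn0 t0.
  have := H; rewrite -(ltr_pM2l tp) mulfV // => H2.
  by rewrite mulrC ltW.
case: (boolp.choice hch) => P HP.
pose p := fun (x : cube n) (i : 'I_n) => \sum_j a j * P j x i.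
apply: le_trans (ereal_inf_lbound _) _.
  exists p; split; last by reflexivity.
  move=> x xS; split.
    move=> i; apply: sumr_ge0 => j _; apply: mulr_ge0 => //.
    by case: ((HP j).1 x xS) => H _; exact: H.
  rewrite /p exchange_big /=.
  rewrite -a1; apply: eq_bigr => j _.
  by rewrite -mulr_sumr; case: ((HP j).1 x xS) => _ ->; rewrite mulr1.
rewrite -EFinD es; apply: ge_ereal_sup => z [x [y [xS yS fxy ->]]].
pose T j := \sum_(i | x i != y i) Num.sqrt (P j x i * P j y i).
have T0 : forall j, 0 <= T j by move=> j; apply: sumr_ge0 => i _; exact: sqrtr_ge0.
rewrite /pair_cost /=.
set t := \sum_(i | _) _.
have tT : \sum_j a j * T j <= t.
  rewrite /T.
  under eq_bigr do rewrite mulr_sumr.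
  rewrite exchange_big /=; apply: ler_sum => i _.
  apply: sqrt_conc => // j.
    by case: ((HP j).1 x xS) => H _; exact: H.
  by case: ((HP j).1 y yS) => H _; exact: H.
pose G := fun j => (f x == fs j x) && (f y == fs j y).
have mG : c <= \sum_(j | G j) a j.
  apply: le_trans _ (@mass _ _ a (fun j => f x == fs j x) (fun j => f y == fs j y) a0 a1).
  have := happ x xS; have := happ y yS; rewrite /c; lra.
have GT : forall j, G j -> 1 <= s' * T j.
  move=> j /andP [/eqP ex /eqP ey]; apply: (HP j).2 => //.
  by rewrite -ex -ey.
have s'0 : 0 < s'.
  case: (pickP G) => [j Gj | G0].
    have := GT j Gj; have := T0 j; nra.
  by move: mG; rewrite big_pred0 //; lra.
have st : c <= s' * t.
  apply: le_trans mG _.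
  apply: le_trans (ler_wpM2l (ltW s'0) tT).
  rewrite mulr_sumr [X in _ <= X](bigID G) /=.
  apply: le_trans (_ : _ <= \sum_(j | G j) s' * (a j * T j)) _.
    apply: ler_sum => j Gj.
    have := GT j Gj; have := a0 j; nra.
  rewrite lerDl; apply: sumr_ge0 => j _; apply: mulr_ge0; first exact: ltW.
  exact: mulr_ge0.
have tp : 0 < t.
  have := mulr_gt0 c0 s'0; nra.
rewrite gt_eqF // lee_fin.
by rewrite ler_pdivlMr // mulrC ler_pdivrMr.
Qed.
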